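(* Let $E\subseteq\mathbb{R}^n$ be compact. Let $S,S'$ be weight sequences with $s_k^{1/k}\to\infty$, $(s'_k)^{1/k}\to\infty$, and suppose there is $\lambda\le1$ with $2\overline{\Gamma}_{s'}(t)\le\underline{\Gamma}_s(\lambda t)$ for all $t>0$. Then there is a constant $D_1>1$ (depending on $S,S'$, $n$) such that the following holds. Let $F=(F^\alpha)_\alpha$ be a jet on $E$ for which there are $C>0$, $\rho\ge1$ with $$|F^\alpha(a)|\le C\rho^{|\alpha|}S_{|\alpha|},\qquad |(R^k_aF)^\alpha(b)|\le C\rho^{k+1}|\alpha|!\,s_{k+1}|b-a|^{k+1-|\alpha|}$$ for all $\alpha\in\mathbb{N}^n$, $k\ge|\alpha|$, $a,b\in E$. Then for all $L\ge D_1\rho$, all $x\in\mathbb{R}^n\setminus E$ and all $\alpha\in\mathbb{N}^n$, $$|(T^{2\overline{\Gamma}_{s'}(Ld(x))}_{\hat x}F)^{(\alpha)}(x)|\le C(2L)^{|\alpha|+1}S_{|\alpha|},$$ and, if $|\alpha|<2\overline{\Gamma}_{s'}(Ld(x))$, $$|(T^{2\overline{\Gamma}_{s'}(Ld(x))}_{\hat x}F)^{(\alpha)}(x)-F^\alpha(\hat x)|\le C(2L)^{|\alpha|+1}|\alpha|!\,s_{|\alpha|+1}\,d(x).$$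
   Context: A weight sequence is given by an increasing sequence $1=\sigma_0\le\sigma_1\le\cdots$ via $S_k=\sigma_0\cdots\sigma_k=k!\,s_k$, with $S_k^{1/k}\to\infty$; analogously $S'\leftrightarrow s'$. For a positive sequence $m$ with $m_0=1$, $m_k^{1/k}\to\infty$, $m_{k+1}/m_k\to\infty$: $h_m(t)=\inf_km_kt^k$, $\overline{\Gamma}_m(t)=\min\{k:h_m(t)=m_kt^k\}$, $\underline{\Gamma}_m(t)=\min\{k:m_{k+1}/m_k\ge1/t\}$ ($t>0$). A jet on $E$ is $F=(F^\alpha)_{\alpha\in\mathbb{N}^n}$, $F^\alpha\in C^0(E)$; $T^p_aF(x)=\sum_{|\alpha|\le p}\frac{(x-a)^\alpha}{\alpha!}F^\alpha(a)$; $(R^p_aF)^\alpha(x)=F^\alpha(x)-\sum_{|\beta|\le p-|\alpha|}\frac{(x-a)^\beta}{\beta!}F^{\alpha+\beta}(a)$. $d(x)=\operatorname{dist}(x,E)$ and $\hat x$ denotes any point of $E$ with $|x-\hat x|=d(x)$. *)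

(* Defs.v *)
From Stdlib Require Import Reals ClassicalEpsilon.
From mathcomp Require Import all_boot.

Set Implicit Arguments.
Unset Strict Implicit.

Local Open Scope R_scope.

Definition pt (n : nat) := 'I_n -> R.
Definition mindex (n : nat) := 'I_n -> nat.

Definition Rsum (T : finType) (P : pred T) (f : T -> R) : R :=
  \big[Rplus/R0]_(i : T | P i) f i.
Definition Rprod (T : finType) (f : T -> R) : R :=
  \big[Rmult/R1]_(i : T) f i.

Definition mlen n (a : mindex n) : nat := (\sum_(i < n) a i)%N.
Definition mfact n (a : mindex n) : nat := (\prod_(i < n) (a i)`!)%N.
Definition madd n (a b : mindex n) : mindex n := fun i => (a i + b i)%N.

Definition mpow n (x a : pt n) (b : mindex n) : R :=
  Rprod (fun i : 'I_n => pow (x i - a i) (b i)).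

Definition edist n (x y : pt n) : R :=
  sqrt (Rsum predT (fun i : 'I_n => Rsqr (x i - y i))).

Definition is_open_set n (U : pt n -> Prop) : Prop :=
  forall x, U x -> exists r, 0 < r /\ forall y, edist x y < r -> U y.
Definition compact_set n (E : pt n -> Prop) : Prop :=
  forall (I : Type) (U : I -> pt n -> Prop),
    (forall i, is_open_set (U i)) ->
    (forall x, E x -> exists i, U i x) ->
    exists l : list I, forall x, E x -> exists i, List.In i l /\ U i x.

Definition bigS (sigma : nat -> R) (k : nat) : R :=
  \big[Rmult/R1]_(j < k.+1) sigma j.
Definition smalls (sigma : nat -> R) (k : nat) : R :=
  bigS sigma k / INR (k`!).

Definition root_to_infty (m : nat -> R) : Prop :=
  forall M : R, exists N : nat, forall k : nat,
    (N <= k)%N -> (1 <= k)%N -> M <= Rpower (m k) (/ INR k).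

Definition weight_sequence (sigma : nat -> R) : Prop :=
  sigma 0%N = 1 /\ (forall k, sigma k <= sigma k.+1) /\ root_to_infty (bigS sigma).

Definition nat_min (P : nat -> Prop) : nat :=
  epsilon (inhabits 0%N) (fun k => P k /\ forall j, P j -> (k <= j)%N).

(* Gamma_bar_m(t) = min{k : h_m(t) = m_k t^k}, h_m(t) = inf_k m_k t^k;
   h_m(t) = m_k t^k means m_k t^k <= m_j t^j for all j. *)
Definition Gamma_bar (m : nat -> R) (t : R) : nat :=
  nat_min (fun k => forall j : nat, m k * pow t k <= m j * pow t j).

Definition Gamma_under (m : nat -> R) (t : R) : nat :=
  nat_min (fun k => / t <= m k.+1 / m k).

Definition jet (n : nat) := mindex n -> pt n -> R.

Definition jet_continuous_on n (E : pt n -> Prop) (f : pt n -> R) : Prop :=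
  forall a, E a -> forall eps, 0 < eps -> exists del, 0 < del /\
    forall b, E b -> edist b a < del -> Rabs (f b - f a) < eps.

(* (T^p_a F)^{(alpha)}(x) = sum_{|beta| <= p - |alpha|} (x-a)^beta/beta! F^{alpha+beta}(a)
   (the alpha-th derivative of the Taylor polynomial; it is 0 when |alpha| > p).
   beta ranges over multi-indices with entries <= p, filtered by |alpha|+|beta| <= p. *)
Definition taylor_deriv n (F : jet n) (p : nat) (a : pt n) (alpha : mindex n)
    (x : pt n) : R :=
  Rsum (fun b : {ffun 'I_n -> 'I_p.+1} =>
          (mlen alpha + mlen (fun i => nat_of_ord (b i)) <= p)%N)
       (fun b => let beta : mindex n := fun i => nat_of_ord (b i) in
          mpow x a beta / INR (mfact beta) * F (madd alpha beta) a).

Definition remainder n (F : jet n) (p : nat) (a : pt n) (alpha : mindex n)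
    (x : pt n) : R :=
  F alpha x - taylor_deriv F p a alpha x.

(* Main.v *)
From HB Require Import structures.
Require Import Defs.
From Stdlib Require Import Reals Lra ClassicalEpsilon Classical FunctionalExtensionality.
From mathcomp Require Import all_boot.
Local Open Scope R_scope.

Lemma RplusA : associative Rplus. Proof. by move=> *; rewrite Rplus_assoc. Qed.
Lemma RmultA : associative Rmult. Proof. by move=> *; rewrite Rmult_assoc. Qed.
HB.instance Definition _ := Monoid.isComLaw.Build R R0 Rplus RplusA Rplus_comm Rplus_0_l.
HB.instance Definition _ := Monoid.isComLaw.Build R R1 Rmult RmultA Rmult_comm Rmult_1_l.
HB.instance Definition _ := Monoid.isMulLaw.Build R R0 Rmult Rmult_0_l Rmult_0_r.
HB.instance Definition _ := Monoid.isAddLaw.Build R Rmult Rplus Rmult_plus_distr_r Rmult_plus_distr_l.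

Lemma binC_le n m : ('C(n, m) <= 2 ^ n)%N.
Proof.
elim: n m => [|n IH] [|m]; rewrite ?bin0 ?expn_gt0 ?bin0n //.
rewrite binS expnS mul2n -addnn; apply: leq_add; exact: IH.
Qed.

Lemma fact_add m k : ((m + k)`! <= 2 ^ (m + k) * (m`! * k`!))%N.
Proof.
rewrite -{1}(bin_fact (leq_addr k m)) addKn.
by apply: leq_mul => //; apply: binC_le.
Qed.

Lemma fact_sum n (f : 'I_n -> nat) :
  ((\sum_(i<n) f i)`! <= 2 ^ (n * \sum_(i<n) f i) * \prod_(i<n) (f i)`!)%N.
Proof.
elim: n f => [|n IH] f; first by rewrite !big_ord0.
rewrite !big_ord_recr /=.
set A := (\sum_(i < n) _)%N; set B := f ord_max.
apply: (leq_trans (fact_add A B)).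
have := IH (fun i => f (widen_ord (leqnSn n) i)); rewrite -/A => HA.
apply: (@leq_trans (2 ^ (A + B) * ((2 ^ (n * A) * \prod_(i < n) (f (widen_ord (leqnSn n) i))`!) * B`!))).
  by apply: leq_mul => //; apply: leq_mul.
rewrite mulnA mulnA -expnD [X in (_ <= X)%N]mulnA.
apply: leq_mul; last exact: leqnn. apply: leq_mul; last exact: leqnn. by rewrite leq_exp2l // mulSn mulnDr addnA leq_addr.
Qed.

Lemma Rsum_abs_le (T : finType) (P : pred T) (f g : T -> R) :
  (forall i, P i -> Rabs (f i) <= g i) -> Rabs (Rsum P f) <= Rsum P g.
Proof.
move=> H; rewrite /Rsum.
apply: (big_ind2 (fun u v => Rabs u <= v)).
- by rewrite Rabs_R0; apply: Rle_refl.
- move=> u1 v1 u2 v2 h1 h2; apply: (Rle_trans _ _ _ (Rabs_triang _ _)); lra.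
- exact: H.
Qed.

Lemma Rsum_le (T : finType) (P : pred T) (f g : T -> R) :
  (forall i, P i -> f i <= g i) -> Rsum P f <= Rsum P g.
Proof.
move=> H; rewrite /Rsum.
apply: (big_ind2 (fun u v => u <= v)); [lra| move=> *; lra | exact: H].
Qed.

Lemma Rsum_sub (T : finType) (P : pred T) (g : T -> R) :
  (forall i, 0 <= g i) -> Rsum P g <= Rsum predT g.
Proof.
move=> H; rewrite /Rsum big_mkcond /=.
apply: (big_ind2 (fun u v => u <= v)); [lra| move=> *; lra |].
move=> i _; case: (P i); [lra | exact: H].
Qed.

Lemma prod_pow_sum n (c : R) (f : 'I_n -> nat) :
  Rprod (fun i => pow c (f i)) = pow c (\sum_(i < n) f i)%N.
Proof.
rewrite /Rprod; symmetry.
apply: (big_morph (fun k => pow c k) (fun a b => pow_add c a b) (erefl _)).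
Qed.

Lemma geom4 p : \big[Rplus/R0]_(m < p.+1) pow (/4) m <= 4/3 - /3 * pow (/4) p.
Proof.
elim: p => [|p IH]; first by rewrite big_ord_recr big_ord0 /=; lra.
rewrite big_ord_recr /=.
have h : 0 <= pow (/4) p by apply: pow_le; lra.
move: IH; set S := \big[Rplus/R0]_(i < p.+1) _ => IH. nra.
Qed.

Lemma prod_const2 n : Rprod (fun _ : 'I_n => 2) = pow 2 n.
Proof.
rewrite /Rprod big_const_ord; elim: n => //= n ->; by [].
Qed.

Lemma Rprod_le n (f g : 'I_n -> R) :
  (forall i, 0 <= f i <= g i) -> Rprod f <= Rprod g.
Proof.
move=> H; rewrite /Rprod.
have : 0 <= \big[Rmult/R1]_(i < n) f i <= \big[Rmult/R1]_(i < n) g i.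
  apply: (big_ind2 (fun u v => 0 <= u <= v)); [lra| |by move=> i _; apply: H].
  move=> u1 v1 u2 v2 h1 h2; split; [nra|].
  apply: Rmult_le_compat; lra.
by case.
Qed.

Lemma sum_bound n p (P : pred {ffun 'I_n -> 'I_p.+1}) (f : _ -> R) K :
  0 <= K ->
  (forall b, P b -> Rabs (f b) <= K * pow (/4) (\sum_(i < n) nat_of_ord (b i))%N) ->
  Rabs (Rsum P f) <= K * pow 2 n.
Proof.
move=> HK H.
apply: (Rle_trans _ _ _ (@Rsum_abs_le _ P f (fun b => K * pow (/4) (\sum_(i < n) nat_of_ord (b i))%N) H)).
have h0 : forall b : {ffun 'I_n -> 'I_p.+1},
    0 <= K * pow (/4) (\sum_(i < n) nat_of_ord (b i))%N.
  move=> b; apply: Rmult_le_pos => //; apply: pow_le; lra.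
apply: (Rle_trans _ _ _ (@Rsum_sub _ P _ h0)).
rewrite /Rsum.
have -> : \big[Rplus/0]_(b : {ffun 'I_n -> 'I_p.+1} | predT b)
      (K * pow (/4) (\sum_(i < n) nat_of_ord (b i))%N)
    = K * \big[Rplus/0]_(b : {ffun 'I_n -> 'I_p.+1})
         \big[Rmult/R1]_(i < n) pow (/4) (nat_of_ord (b i)).
  rewrite big_distrr /=; apply: eq_bigr => b _; congr (_ * _).
  by rewrite -prod_pow_sum.
apply: Rmult_le_compat_l => //.
rewrite -(@bigA_distr_bigA R R0 R1 Rmult Rplus _ _ (fun (i : 'I_n) (j : 'I_p.+1) => pow (/4) j)).
rewrite -prod_const2.
apply: Rprod_le => i; split.
  apply: (big_ind (fun u => 0 <= u)); [lra | move=> u v hu hv; simpl in *; lra | move=> j _; apply: pow_le; lra].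
have := geom4 p.
have := pow_le (/4) p. move=> h1 h2; apply: (Rle_trans _ _ _ h2); have := h1 ltac:(lra); lra.
Qed.

Lemma sum_nonneg (T : finType) (P : pred T) (g : T -> R) :
  (forall i, 0 <= g i) -> 0 <= \big[Rplus/R0]_(i | P i) g i.
Proof.
move=> H; apply: (big_ind (fun u => 0 <= u)); [lra | move=> u v hu hv; simpl in *; lra | move=> i _; exact: H].
Qed.

Lemma coord_le_edist n (x y : pt n) i : Rabs (x i - y i) <= edist x y.
Proof.
rewrite /edist -sqrt_Rsqr_abs; apply: sqrt_le_1_alt.
rewrite /Rsum (bigD1 i) //=.
rewrite -{1}(Rplus_0_r (Rsqr _)); apply: Rplus_le_compat_l; apply: sum_nonneg => j; exact: Rle_0_sqr.
Qed.

Lemma edist_pos n (x y : pt n) : x <> y -> 0 < edist x y.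
Proof.
move=> Hxy.
have h0 : 0 <= edist x y by apply: sqrt_pos.
case: (Rle_lt_or_eq_dec _ _ h0) => // h; exfalso; apply: Hxy.
apply: functional_extensionality => i.
have := coord_le_edist _ x y i; rewrite -h => h1.
have := Rabs_pos (x i - y i).
have := Rle_abs (x i - y i); have := Rle_abs (-(x i - y i)); rewrite Rabs_Ropp; lra.
Qed.

Lemma least_exists (P : nat -> Prop) k : P k -> exists k0, P k0 /\ forall j, P j -> (k0 <= j)%N.
Proof.
elim/ltn_ind: k => k IH Pk.
case: (classic (exists j, P j /\ (j < k)%N)) => [[j [Pj ljk]]|h]; first exact: IH Pj.
exists k; split => // j Pj; rewrite leqNgt; apply/negP => hjk; apply: h; by exists j.
Qed.

Lemma nat_min_spec (P : nat -> Prop) : (exists k, P k) ->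
  P (nat_min P) /\ forall j, P j -> (nat_min P <= j)%N.
Proof.
move=> [k Pk]; rewrite /nat_min; apply: (epsilon_spec (inhabits 0%N) (fun k => P k /\ forall j, P j -> (k <= j)%N)); exact: least_exists Pk.
Qed.

Lemma sigma_ge1 sigma : weight_sequence sigma -> forall k, 1 <= sigma k.
Proof.
move=> [h0 [hinc _]]; elim => [|k IH]; first by rewrite h0; lra.
have := hinc k; lra.
Qed.

Lemma bigS_pos sigma : weight_sequence sigma -> forall k, 0 < bigS sigma k.
Proof.
move=> hw k; rewrite /bigS; apply: (big_ind (fun u => 0 < u)); [lra| move=> u v hu hv; simpl in *; nra|].
move=> i _; have := sigma_ge1 _ hw i; lra.
Qed.

Lemma INR_fact_pos k : 0 < INR (k`!).
Proof. apply: lt_0_INR; apply/ltP; exact: fact_gt0. Qed.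

Lemma smalls_pos sigma : weight_sequence sigma -> forall k, 0 < smalls sigma k.
Proof.
move=> hw k; rewrite /smalls; apply: Rdiv_lt_0_compat; [exact: bigS_pos | exact: INR_fact_pos].
Qed.

Lemma smalls0 sigma : weight_sequence sigma -> smalls sigma 0 = 1.
Proof.
move=> [h0 _]; rewrite /smalls /bigS big_ord1 h0 /=; field.
Qed.

Lemma bigS_smalls sigma k : bigS sigma k = INR (k`!) * smalls sigma k.
Proof.
rewrite /smalls; have := INR_fact_pos k; move=> h; field; lra.
Qed.

Lemma gu_exists sigma t : weight_sequence sigma -> root_to_infty (smalls sigma) -> 0 < t ->
  exists k, / t <= smalls sigma k.+1 / smalls sigma k.
Proof.
move=> hw hr ht; apply: NNPP => hn.
set s := smalls sigma.
have hs : forall k, s k.+1 < s k * / t.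
  move=> k; have hk : ~ (/ t <= s k.+1 / s k) by move=> h; apply: hn; exists k.
  have := smalls_pos _ hw k; rewrite -/s => hp.
  have h2 : s k.+1 / s k < / t by lra.
  have := Rmult_lt_compat_r (s k) _ _ hp h2.
  rewrite /Rdiv Rmult_assoc Rinv_l; lra.
set M := Rmax (/ t) 1.
have hM1 : 1 <= M by apply: Rmax_r.
have hMt : / t <= M by apply: Rmax_l.
have hb : forall k, s k <= pow M k.
  elim => [|k IH]; first by rewrite /s smalls0 //=; lra.
  have := hs k; have := smalls_pos _ hw k; rewrite -/s => hp h.
  have ht' : 0 < / t by apply: Rinv_0_lt_compat.
  rewrite /=; apply: Rlt_le; apply: (Rlt_le_trans _ _ _ h).
  rewrite Rmult_comm; apply: Rmult_le_compat; lra.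
have [N HN] := hr (M + 1).
have := HN N.+1 (leqnSn N) (ltn0Sn N).
have hp := smalls_pos _ hw N.+1.
have : Rpower (s N.+1) (/ INR N.+1) <= Rpower (pow M N.+1) (/ INR N.+1).
  apply: Rle_Rpower_l.
    apply: Rlt_le; apply: Rinv_0_lt_compat; apply: lt_0_INR; apply/ltP; done.
  split => //; exact: hb.
rewrite -Rpower_pow; last lra.
rewrite Rpower_mult Rinv_r; last by apply: not_0_INR.
rewrite Rpower_1; last lra.
rewrite -/s; lra.
Qed.

Lemma gu_prop sigma t : weight_sequence sigma -> root_to_infty (smalls sigma) -> 0 < t ->
  forall k, (k < Gamma_under (smalls sigma) t)%N -> smalls sigma k.+1 * t < smalls sigma k.
Proof.
move=> hw hr ht k hk.
have [_ hmin] := nat_min_spec _ (gu_exists _ _ hw hr ht).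
have hn : ~ (/ t <= smalls sigma k.+1 / smalls sigma k).
  move=> h; have := hmin k h; rewrite /Gamma_under in hk; rewrite leqNgt hk //.
have := smalls_pos _ hw k => hp.
have h2 : smalls sigma k.+1 / smalls sigma k < / t by lra.
have e1 : smalls sigma k.+1 = (smalls sigma k.+1 / smalls sigma k) * smalls sigma k.
  by field; lra.
rewrite e1; move: h2; set q := smalls sigma k.+1 / smalls sigma k => h2.
have h3 : q * t < 1.
  have := Rmult_lt_compat_r t _ _ ht h2; rewrite Rinv_l; lra.
nra.
Qed.

Lemma s_chain (s : nat -> R) t G : 0 < t -> (forall k, 0 < s k) ->
  (forall k, (k < G)%N -> s k.+1 * t < s k) ->
  forall m i, (m + i <= G)%N -> s (m + i)%N * pow t i <= s m.
Proof.
move=> ht hp hG m; elim => [|i IH] hmi.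
  by rewrite addn0 /=; lra.
have h1 : (m + i < G)%N by rewrite -addnS.
have h2 := hG _ h1.
have h3 := IH (ltnW h1).
rewrite addnS /=.
have h4 : 0 < pow t i by apply: pow_lt.
have : s (m + i).+1 * t * pow t i <= s (m + i)%N * pow t i.
  apply: Rmult_le_compat_r; lra.
lra.
Qed.

Lemma INR_muln m k : INR (m * k)%N = INR m * INR k.
Proof. by rewrite -mult_INR. Qed.

Lemma INR_exp2 k : INR (2 ^ k)%N = pow 2 k.
Proof. elim: k => [|k IH] //=. by rewrite expnS INR_muln IH. Qed.

Lemma mlen_madd n (a b : mindex n) : mlen (madd a b) = (mlen a + mlen b)%N.
Proof. by rewrite /mlen /madd big_split. Qed.

Lemma mpow_bound n (x xh : pt n) d (beta : mindex n) :
  (forall i, Rabs (x i - xh i) <= d) -> Rabs (mpow x xh beta) <= pow d (mlen beta).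
Proof.
move=> H; rewrite /mpow /mlen -prod_pow_sum.
have -> : forall f : 'I_n -> R, Rabs (Rprod f) = Rprod (fun i => Rabs (f i)).
  move=> f; rewrite /Rprod; apply: (big_morph Rabs Rabs_mult); exact: Rabs_R1.
apply: (Rprod_le _ (fun i => Rabs (pow (x i - xh i) (beta i)))) => i; split.
  exact: Rabs_pos.
rewrite -RPow_abs; apply: pow_incr; split; [exact: Rabs_pos | exact: H].
Qed.

Lemma fact_bound n (a : nat) (beta : mindex n) :
  INR ((a + mlen beta)`!) <= pow 2 (a + mlen beta) * pow (pow 2 n) (mlen beta) * INR (a`!) * INR (mfact beta).
Proof.
have hn : ((a + mlen beta)`! <= 2 ^ (a + mlen beta) * (a`! * (2 ^ (n * mlen beta) * mfact beta)))%N.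
  apply: (leq_trans (fact_add a (mlen beta))).
  apply: leq_mul => //; apply: leq_mul => //; exact: fact_sum.
have := le_INR _ _ (elimT leP hn).
rewrite !INR_muln !INR_exp2 pow_mult => h.
apply: (Rle_trans _ _ _ h); right; ring.
Qed.

Lemma term_bound n (F : jet n) sigma C rho (x xh : pt n) d (alpha beta : mindex n) :
  weight_sequence sigma -> 0 < C -> 1 <= rho -> 0 <= d -> (forall i, Rabs (x i - xh i) <= d) ->
  Rabs (F (madd alpha beta) xh) <= C * pow rho (mlen (madd alpha beta)) * bigS sigma (mlen (madd alpha beta)) ->
  Rabs (mpow x xh beta / INR (mfact beta) * F (madd alpha beta) xh)
   <= C * pow (2*rho) (mlen alpha) * INR ((mlen alpha)`!) * smalls sigma (mlen alpha + mlen beta)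
      * pow (pow 2 n.+1 * rho * d) (mlen beta).
Proof.
move=> hw hC hr hd hx HF.
rewrite mlen_madd bigS_smalls in HF.
have hm := mpow_bound _ x xh d beta hx.
have hfb := fact_bound n (mlen alpha) beta.
move: HF hm hfb.
set a := mlen alpha; set j := mlen beta; set mp := mpow x xh beta; set Fv := F _ xh.
set X := INR ((a + j)`!); set mf := INR (mfact beta); set s := smalls sigma (a + j).
set af := INR (a`!).
move=> HF hm hfb.
have hmf : 0 < mf.
  rewrite /mf; apply: lt_0_INR; apply/ltP; rewrite /mfact; apply: prodn_gt0 => i; exact: fact_gt0.
have hs : 0 < s by apply: smalls_pos.
have hX : 0 <= X by apply: pos_INR.
have hrj : 0 < pow rho (a + j) by apply: pow_lt; lra.
have hdj : 0 <= pow d j by apply: pow_le.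
rewrite /Rdiv Rabs_mult Rabs_mult Rabs_inv (Rabs_pos_eq mf); last lra.
set Y := pow 2 (a + j) * pow (pow 2 n) j * af.
have step1 : Rabs mp * / mf * Rabs Fv <= pow d j * / mf * (C * pow rho (a + j) * (Y * mf) * s).
  apply: Rmult_le_compat.
  - apply: Rmult_le_pos; [exact: Rabs_pos | apply: Rlt_le; exact: Rinv_0_lt_compat].
  - exact: Rabs_pos.
  - apply: Rmult_le_compat_r; [apply: Rlt_le; exact: Rinv_0_lt_compat | exact: hm].
  - apply: (Rle_trans _ _ _ HF).
    have h1 : X * s <= (Y * mf) * s by apply: Rmult_le_compat_r; [lra | exact: hfb].
    have h2 : 0 <= C * pow rho (a + j) by nra.
    rewrite [X in _ <= X]Rmult_assoc; exact: (Rmult_le_compat_l _ _ _ h2 h1).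
apply: (Rle_trans _ _ _ step1); right.
have e2 : pow 2 n.+1 = 2 * pow 2 n by []. rewrite e2 /Y !pow_add !Rpow_mult_distr.
field; lra.
Qed.

Lemma term0 n (F : jet n) alpha (x a : pt n) (beta : mindex n) :
  (forall i, beta i = 0%N) ->
  mpow x a beta / INR (mfact beta) * F (madd alpha beta) a = F alpha a.
Proof.
move=> hb.
have -> : beta = (fun _ => 0%N) by apply: functional_extensionality.
have -> : madd alpha (fun _ => 0%N) = alpha.
  by apply: functional_extensionality => i; rewrite /madd addn0.
have -> : mfact (fun _ : 'I_n => 0%N) = 1%N by rewrite /mfact big1.
have -> : mpow x a (fun _ => 0%N) = 1.
  by rewrite /mpow /Rprod big1.
rewrite /=; field.
Qed.

Lemma j_pos n p (b : {ffun 'I_n -> 'I_p.+1}) :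
  b != [ffun=> ord0] -> (0 < \sum_(i < n) nat_of_ord (b i))%N.
Proof.
move=> hb; rewrite lt0n; apply/negP => /eqP h0; move/eqP: hb; apply.
apply/ffunP => i; rewrite ffunE; apply: val_inj => /=.
have : (nat_of_ord (b i) <= \sum_(k < n) nat_of_ord (b k))%N.
  by rewrite (bigD1 i) //= leq_addr.
by rewrite h0 leqn0 => /eqP.
Qed.

Theorem lemma5p2 (n : nat) (sigma sigma' : nat -> R) :
  weight_sequence sigma -> weight_sequence sigma' ->
  root_to_infty (smalls sigma) -> root_to_infty (smalls sigma') ->
  (exists lambda : R, 0 < lambda /\ lambda <= 1 /\
     forall t : R, 0 < t ->
       (2 * Gamma_bar (smalls sigma') t <= Gamma_under (smalls sigma) (lambda * t))%N) ->
  exists D1 : R, 1 < D1 /\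
  forall (E : pt n -> Prop), compact_set E ->
  forall (F : jet n) (C rho : R),
    (forall alpha, jet_continuous_on E (F alpha)) ->
    0 < C -> 1 <= rho ->
    (forall (alpha : mindex n) (a : pt n), E a ->
       Rabs (F alpha a) <= C * pow rho (mlen alpha) * bigS sigma (mlen alpha)) ->
    (forall (alpha : mindex n) (k : nat) (a b : pt n),
       (mlen alpha <= k)%N -> E a -> E b ->
       Rabs (remainder F k a alpha b)
         <= C * pow rho k.+1 * INR ((mlen alpha)`!) * smalls sigma k.+1
              * pow (edist b a) (k.+1 - mlen alpha)) ->
    forall (L : R), D1 * rho <= L ->
    forall (x xh : pt n), ~ E x -> E xh ->
      (forall y, E y -> edist x xh <= edist x y) ->
      let d := edist x xh in
      let p := (2 * Gamma_bar (smalls sigma') (L * d))%N in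
      forall alpha : mindex n,
        Rabs (taylor_deriv F p xh alpha x)
          <= C * pow (2 * L) (mlen alpha).+1 * bigS sigma (mlen alpha)
        /\ ((mlen alpha < p)%N ->
            Rabs (taylor_deriv F p xh alpha x - F alpha xh)
              <= C * pow (2 * L) (mlen alpha).+1 * INR ((mlen alpha)`!)
                   * smalls sigma (mlen alpha).+1 * d).
Proof.
move=> hw hw' hr hr' [lam [hl0 [hl1 hG]]].
set P2 := pow 2 n.
have hP2 : 1 <= P2 by apply: pow_R1_Rle; lra.
have hK8 : 8 <= 8 * P2 * P2 by nra.
exists (8 * P2 * P2 / lam); split.
  have : 8 * P2 * P2 <= 8 * P2 * P2 / lam.
    have e : 8 * P2 * P2 / lam = (8 * P2 * P2) * / lam by [].
    have hi : 1 <= / lam.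
      rewrite -Rinv_1; apply: Rinv_le_contravar => //.
    rewrite e; nra.
  lra.
move=> E _ F C rho _ hC hrho HF _ L hL x xh hxE hxhE _ d p alpha.
have hxne : x <> xh by move=> e; apply: hxE; rewrite e.
have hc : forall i, Rabs (x i - xh i) <= d := fun i => coord_le_edist _ x xh i.
have hd : 0 < d := edist_pos _ x xh hxne.
clearbody d.
have hKl : 8 * P2 * P2 * rho <= lam * L.
  have e : lam * (8 * P2 * P2 / lam * rho) = 8 * P2 * P2 * rho by field; lra.
  rewrite -e; apply: Rmult_le_compat_l; lra.
have hLpos : 0 < L by nra.
have hL1 : 8 * P2 * P2 * rho <= L by nra.
set t := lam * (L * d).
have ht : 0 < t by rewrite /t; apply: Rmult_lt_0_compat => //; nra.
have hp : (p <= Gamma_under (smalls sigma) t)%N.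
  exact: (hG (L * d) ltac:(nra)).
set G := Gamma_under (smalls sigma) t.
have hch := s_chain (smalls sigma) t G ht (smalls_pos _ hw) (gu_prop _ _ hw hr ht).
set r := pow 2 n.+1 * rho * d.
have e2 : pow 2 n.+1 = 2 * P2 by [].
have eP2 : pow 2 n = P2 by [].
clearbody P2.
have hr0 : 0 <= r by rewrite /r e2; apply: Rmult_le_pos; [apply: Rmult_le_pos|]; lra.
have hr4 : r <= t * / 4.
  rewrite /r /t e2.
  have h1 : 8 * P2 * P2 * rho * d <= lam * L * d by apply: Rmult_le_compat_r; lra.
  have h2 : 8 * P2 * rho * d <= 8 * P2 * P2 * rho * d.
    have : 0 <= 8 * P2 * rho * d * (P2 - 1) by repeat apply: Rmult_le_pos; lra.
    lra.
  lra.
have hrpow : forall i, pow r i <= pow t i * pow (/ 4) i.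
  move=> i; rewrite -Rpow_mult_distr; apply: pow_incr; split => //.
set a := mlen alpha.
have haf : 0 < INR (a`!) := INR_fact_pos a.
have h2r : 0 < pow (2 * rho) a by apply: pow_lt; lra.
have h2L : pow (2 * rho) a <= pow (2 * L) a by apply: pow_incr; split; nra.
have hq : forall j, 0 < pow (/4) j by move=> j; apply: pow_lt; lra.
have htj : forall j, 0 < pow t j by move=> j; apply: pow_lt.
split.
- apply: (Rle_trans _ (C * pow (2 * rho) a * bigS sigma a * pow 2 n)).
    apply: sum_bound.
      have hS := bigS_pos _ hw a; repeat apply: Rmult_le_pos; lra.
    move=> b hb.
    set j := (\sum_(i < n) nat_of_ord (b i))%N.
    apply: Rle_trans.
      exact: (term_bound _ F sigma C rho x xh d alpha (fun i => nat_of_ord (b i)) hw hC hrho (Rlt_le _ _ hd) hc (HF _ _ hxhE)).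
    change (mlen alpha) with a in hb |- *.
    change (mlen (fun i => nat_of_ord (b i))) with j in hb |- *.
    change (pow 2 n.+1 * rho * d) with r.
    have h1 := hch a j (leq_trans hb hp).
    have h2 := hrpow j.
    rewrite bigS_smalls.
    have hsj := smalls_pos _ hw (a + j).
    have h3 : smalls sigma (a + j) * pow r j <= smalls sigma a * pow (/4) j.
      apply: (Rle_trans _ (smalls sigma (a + j) * (pow t j * pow (/ 4) j))).
        apply: Rmult_le_compat_l; lra.
      rewrite -Rmult_assoc; apply: Rmult_le_compat_r; [have := hq j; lra | exact: h1].
    have hQ : 0 <= C * pow (2 * rho) a * INR (a`!) by repeat apply: Rmult_le_pos; lra.
    have := Rmult_le_compat_l _ _ _ hQ h3.
    lra.
  rewrite eP2.
  have hP2L : P2 <= 2 * L.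
    have : P2 <= 8 * P2 * P2 * rho.
      have : 0 <= P2 * (8 * P2 * rho - 1) by apply: Rmult_le_pos; nra.
      lra.
    lra.
  have hpw : pow (2 * L) a.+1 = 2 * L * pow (2 * L) a by [].
  rewrite hpw.
  have h1 : pow (2 * rho) a * P2 <= pow (2 * L) a * (2 * L).
    apply: Rmult_le_compat; lra.
  have hS := bigS_pos _ hw a.
  have hCS : 0 <= C * bigS sigma a by nra.
  have := Rmult_le_compat_l _ _ _ hCS h1.
  lra.
- move=> hap.
  have hb0m : mlen (fun i => nat_of_ord (([ffun=> ord0] : {ffun 'I_n -> 'I_p.+1}) i)) = 0%N.
    by rewrite /mlen big1 // => i _; rewrite ffunE.
  rewrite /taylor_deriv /Rsum (bigD1 [ffun=> ord0]); last first.
    by rewrite hb0m addn0 ltnW.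
  rewrite /= term0; last by move=> i; rewrite ffunE.
  have -> : forall u v : R, u + v - u = v by move=> u v; ring.
  set K2 := C * pow (2 * rho) a * INR (a`!) * (4 * r * smalls sigma a.+1).
  have hsa1 := smalls_pos _ hw a.+1.
  apply: (Rle_trans _ (K2 * pow 2 n)).
    apply: sum_bound.
      have hCa : 0 <= C * pow (2 * rho) a * INR (a`!) by repeat apply: Rmult_le_pos; lra.
      have h4 : 0 <= 4 * r * smalls sigma a.+1 by nra.
      rewrite /K2; apply: Rmult_le_pos; lra.
    move=> b /andP [hb hbne].
    have hj := j_pos _ _ b hbne.
    set j := (\sum_(i < n) nat_of_ord (b i))%N in hj |- *.
    apply: Rle_trans.
      exact: (term_bound _ F sigma C rho x xh d alpha (fun i => nat_of_ord (b i)) hw hC hrho (Rlt_le _ _ hd) hc (HF _ _ hxhE)).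
    change (mlen alpha) with a in hb |- *.
    change (mlen (fun i => nat_of_ord (b i))) with j in hb |- *.
    change (pow 2 n.+1 * rho * d) with r.
    have [j' ej] : exists j', j = j'.+1 by exists j.-1; rewrite prednK.
    rewrite ej in hb |- *.
    have e3 : (a + j'.+1 = a.+1 + j')%N by rewrite addSnnS.
    rewrite e3 in hb |- *.
    have h1 := hch a.+1 j' (leq_trans hb hp).
    have h2 := hrpow j'.
    have hsj := smalls_pos _ hw (a.+1 + j').
    have h3 : smalls sigma (a.+1 + j') * pow r j' <= smalls sigma a.+1 * pow (/4) j'.
      apply: (Rle_trans _ (smalls sigma (a.+1 + j') * (pow t j' * pow (/ 4) j'))).
        apply: Rmult_le_compat_l; lra.
      rewrite -Rmult_assoc; apply: Rmult_le_compat_r; [have := hq j'; lra | exact: h1].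
    have e4 : pow r j'.+1 = r * pow r j' by [].
    have e5 : pow (/4) j'.+1 = /4 * pow (/4) j' by [].
    rewrite e4 e5 /K2.
    have hQ : 0 <= C * pow (2 * rho) a * INR (a`!) * r.
      apply: Rmult_le_pos; last exact: hr0. repeat apply: Rmult_le_pos; lra.
    have := Rmult_le_compat_l _ _ _ hQ h3.
    lra.
  rewrite eP2 /K2 /r e2.
  have hpw : pow (2 * L) a.+1 = 2 * L * pow (2 * L) a by [].
  have h8 : 8 * P2 * P2 * rho <= 2 * L by lra.
  have h1 : pow (2 * rho) a * (8 * P2 * P2 * rho) <= pow (2 * L) a * (2 * L).
    apply: Rmult_le_compat; try lra.
    repeat apply: Rmult_le_pos; lra.
  have hCS : 0 <= C * INR (a`!) * smalls sigma a.+1 * d.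
    apply: Rmult_le_pos; last lra. apply: Rmult_le_pos; last lra. apply: Rmult_le_pos; lra.
  have := Rmult_le_compat_l _ _ _ hCS h1.
  lra.
Qed.
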